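(* Let $\beta>0$ and let $V\in\mathbb R^{d\times d}$ be real symmetric with orthonormal eigenbasis $(e_k)_{k=1}^d$ and eigenvalues $(\lambda_k)$ satisfying $\lambda_1>\max_{k\ge2}|\lambda_k|$. Let $x_i(t)\in\mathbb S^{d-1}$, $i\in[n]$, solve \[ \dot x_i=P^\perp_{x_i}\Big(\frac1{Z_i}\sum_{j=1}^n e^{\beta\langle x_i,Vx_j\rangle}Vx_j\Big),\qquad Z_i=\sum_{k=1}^n e^{\beta\langle x_i,Vx_k\rangle}, \] and write $c_{i,k}(t)=\langle x_i(t),e_k\rangle$. Suppose there is $\delta>0$ with $c_{i,1}(0)\ge\delta$ for all $i\in[n]$. Then: (1) The cone $\mathcal C_\delta:=\{(x_i)_{i=1}^n\in(\mathbb S^{d-1})^n: c_{i,1}\ge\delta\ \forall i\in[n]\}$ is forward invariant. (2) For every $k\neq1$, setting $r_{i,k}(t)=c_{i,k}(t)/c_{i,1}(t)$ and $R_k(t)=\max_{1\le i\le n}|r_{i,k}(t)|$, one has $R_k(t)\le R_k(0)e^{-\delta(\lambda_1-|\lambda_k|)t}$ for all $t\ge0$. (3) For every $i\in[n]$, $x_i(t)\to e_1$ as $t\to\infty$.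
   Context: $P^\perp_xy=y-\langle x,y\rangle x$ denotes the orthogonal projection onto $T_x\mathbb S^{d-1}$. *)

(* Defs.v *)
From HB Require Import structures.
From mathcomp Require Import all_boot all_order all_algebra.
From mathcomp Require Import all_classical all_reals all_analysis.
Set Implicit Arguments. Unset Strict Implicit. Unset Printing Implicit Defensive.
Import Order.TTheory GRing.Theory Num.Theory.
Import numFieldNormedType.Exports.
Local Open Scope ring_scope.

Definition dotv {R : realType} {d : nat} (u v : 'cV[R]_d) : R :=
  \sum_(j < d) u j 0 * v j 0.

Definition Pperp {R : realType} {d : nat} (x y : 'cV[R]_d) : 'cV[R]_d :=
  y - dotv x y *: x.

Definition Zpart {R : realType} {d n : nat} (beta : R) (V : 'M[R]_d)
  (X : 'I_n -> 'cV[R]_d) (i : 'I_n) : R :=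
  \sum_(k < n) expR (beta * dotv (X i) (V *m X k)).

Definition attn_field {R : realType} {d n : nat} (beta : R) (V : 'M[R]_d)
  (X : 'I_n -> 'cV[R]_d) (i : 'I_n) : 'cV[R]_d :=
  Pperp (X i) ((Zpart beta V X i)^-1 *:
     \sum_(j < n) (expR (beta * dotv (X i) (V *m X j)) *: (V *m X j))).

(* Main.v *)
Require Import Defs.
From HB Require Import structures.
From mathcomp Require Import all_boot all_order all_algebra.
From mathcomp Require Import all_classical all_reals all_analysis.
From mathcomp Require Import ring lra.
Import Order.TTheory GRing.Theory Num.Theory.
Import numFieldNormedType.Exports.
Local Open Scope classical_set_scope.
Local Open Scope ring_scope.
Section Barrier.
Context {R : realType}.

Lemma deriv_cont (f : R -> R) (t df : R) : is_derive t (1:R) f df -> {for t, continuous f}.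
Proof. by move=> [/derivable1_diffP/differentiable_continuous]. Qed.
Arguments deriv_cont {f t df}.

Lemma near_eps (t : R) (P : R -> Prop) : (\forall u \near t, P u) ->
  exists2 e : R, 0 < e & forall u, `|t - u| < e -> P u.
Proof. by move=> /nbhs_ballP[e e0 H]; exists e => // u tu; apply: H. Qed.

Lemma barrier (I : finType) (g g' : I -> R -> R) (a T : R) :
  (forall i, g i t @[t --> a^'+] --> g i a) ->
  (forall i t, a < t -> t <= T -> is_derive t 1 (g i) (g' i t)) ->
  (forall i, 0 < g i a) ->
  (forall i t, a < t -> t <= T -> (forall j, 0 <= g j t) -> g i t = 0 -> 0 < g' i t) ->
  forall i t, a <= t -> t <= T -> 0 < g i t.
Proof.
move=> gc gd ga gt i0 t0 at0 t0T.
rewrite ltNge; apply/negP => g0.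
pose A := [set u | a <= u <= t0 /\ exists i, g i u <= 0].
have A0 : A t0 by split; [rewrite at0 lexx | exists i0].
have lbA : lbound A a by move=> u [/andP[]].
have hlA : has_lbound A by exists a.
have hiA : has_inf A by split; [exists t0 | ].
set tm := inf A.
have atm : a <= tm by apply: lb_le_inf => //; exists t0.
have tmt0 : tm <= t0 by apply: ge_inf.
have P1 : forall u, a <= u -> u < tm -> forall j, 0 < g j u.
  move=> u au utm j; rewrite ltNge; apply/negP => gju.
  have : tm <= u.
    apply: ge_inf => //; split; last by exists j.
    by rewrite au /= (ltW (lt_le_trans utm tmt0)).
  by rewrite leNgt utm.
have P2 : a < tm.
  rewrite lt_neqAle atm andbT; apply/negP => /eqP atm'.
  have : \forall u \near a^'+, forall j, 0 < g j u.
    apply: filter_forall => j; exact: (cvgr_gt _ (gc j) _ (ga j)).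
  rewrite near_withinE => /near_eps[e e0 He].
  have [u Au ue] := inf_adherent e0 hiA.
  case: Au => /andP[au ut0] [j gj].
  move: au; rewrite le_eqVlt => /orP[/eqP au|au].
    by move: gj; rewrite -au leNgt ga.
  suff : 0 < g j u by rewrite ltNge gj.
  apply: (He u _ au j).
  rewrite -/tm -atm' in ue.
  rewrite distrC ger0_norm; first by lra.
  by rewrite subr_ge0 ltW.
have tmT : tm <= T by apply: le_trans t0T.
have P3 : forall j, 0 <= g j tm.
  move=> j; rewrite leNgt; apply/negP => gneg.
  have : \forall t \near tm, g j t < 0.
    by apply: (cvgr_lt _ (deriv_cont (gd j tm P2 tmT)) _ gneg).
  move=> /near_eps[e e0 He].
  pose m := Num.min e (tm - a).
  have m0 : 0 < m by rewrite lt_min e0 subr_gt0.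
  have me : m <= e by rewrite ge_min lexx.
  have ma : m <= tm - a by rewrite ge_min lexx orbT.
  have := He (tm - m / 2) _.
  have := P1 (tm - m / 2) _ _ j.
  move=> H1 H2; have : 0 < 0 :> R.
    apply: lt_trans (H2 _); first apply: H1; try lra.
    rewrite opprB addrC subrK ger0_norm; lra.
  by rewrite ltxx.
have [i gi] : exists i, g i tm <= 0.
  apply: contrapT => H.
  have H' : forall i, 0 < g i tm.
    by move=> i; rewrite ltNge; apply/negP => hi; apply: H; exists i.
  have : \forall u \near tm, forall j, 0 < g j u.
    refine (@filter_forall R I (fun j u => 0 < g j u) (nbhs tm) _ _) => j.
    exact: (cvgr_gt _ (deriv_cont (gd j tm P2 tmT)) _ (H' j)).
  move=> /near_eps[e e0 He].
  have [u Au ue] := inf_adherent e0 hiA.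
  have tmu : tm <= u by apply: ge_inf.
  case: Au => _ [j gj].
  suff : 0 < g j u by rewrite ltNge gj.
  apply: (He u _ j).
  rewrite distrC ger0_norm; first by rewrite -/tm in ue; lra.
  by rewrite subr_ge0.
have gi0 : g i tm = 0 by apply/le_anti; rewrite gi P3.
have gpos := gt i tm P2 tmT P3 gi0.
case: (gd i tm P2 tmT) => Dder Dval.
have Q : (fun h => h^-1 *: ((g i \o shift tm) (h *: 1) - g i tm)) @ 0^' --> g' i tm.
  by rewrite -Dval; exact: Dder.
have : \forall h \near 0^', 0 < h^-1 *: ((g i \o shift tm) (h *: 1) - g i tm).
  by apply: (cvgr_gt _ Q _ gpos).
rewrite near_withinE => /near_eps[e e0 He].
pose m := Num.min e (tm - a).
have m0 : 0 < m by rewrite lt_min e0 subr_gt0.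
have me : m <= e by rewrite ge_min lexx.
have ma : m <= tm - a by rewrite ge_min lexx orbT.
have hm : - (m/2) != 0 by rewrite oppr_eq0 mulf_neq0 // ?gt_eqF // invr_gt0.
have hb : `|0 - - (m/2)| < e by rewrite sub0r opprK ger0_norm; lra.
have H2 := He _ hb hm.
move: H2; rewrite /= gi0 subr0 /shift /=.
have -> : (- (m/2)) *: (1:R) = - (m/2) by rewrite /GRing.scale /= mulr1.
have H5 := P1 (- (m / 2) + tm) ltac:(lra) ltac:(lra) i.
have hneg : (- (m / 2))^-1 < 0 by rewrite invr_lt0; lra.
rewrite -[_ *: _]/(_ * _) => H2.
nra.
Qed.
End Barrier.
Section LinAlg.
Context {R : realType}.

Lemma dotvDl d (u w v : 'cV[R]_d) : dotv (u + w) v = dotv u v + dotv w v.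
Proof. by rewrite /dotv -big_split; apply: eq_bigr => j _; rewrite mxE mulrDl. Qed.

Lemma dotvZl d a (u v : 'cV[R]_d) : dotv (a *: u) v = a * dotv u v.
Proof. by rewrite /dotv mulr_sumr; apply: eq_bigr => j _; rewrite mxE mulrA. Qed.

Lemma dotvNl d (u v : 'cV[R]_d) : dotv (- u) v = - dotv u v.
Proof. by rewrite -scaleN1r dotvZl mulN1r. Qed.

Lemma dotvBl d (u w v : 'cV[R]_d) : dotv (u - w) v = dotv u v - dotv w v.
Proof. by rewrite dotvDl dotvNl. Qed.

Lemma dotvC d (u v : 'cV[R]_d) : dotv u v = dotv v u.
Proof. by apply: eq_bigr => j _; rewrite mulrC. Qed.

Lemma dotv_suml d n (F : 'I_n -> 'cV[R]_d) v :
  dotv (\sum_(i < n) F i) v = \sum_(i < n) dotv (F i) v.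
Proof.
rewrite /dotv exchange_big /=; apply: eq_bigr => j _.
by rewrite summxE mulr_suml.
Qed.

Lemma dotv_coef {d} {e : 'I_d -> 'cV[R]_d} {a : 'I_d -> R} {k} :
  (forall k l, dotv (e k) (e l) = (k == l)%:R) ->
  dotv (\sum_(l < d) a l *: e l) (e k) = a k.
Proof.
move=> orth; rewrite dotv_suml (bigD1 k) //= dotvZl orth eqxx mulr1.
rewrite big1 ?addr0 // => l /negPf lk; by rewrite dotvZl orth lk mulr0.
Qed.

Lemma expand {d} {e : 'I_d -> 'cV[R]_d} :
  (forall k l, dotv (e k) (e l) = (k == l)%:R) ->
  forall u, u = \sum_(k < d) dotv u (e k) *: e k.
Proof.
move=> orth u.
pose E := \matrix_(i, k) e k i 0 : 'M[R]_d.
have EE : E^T *m E = 1%:M.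
  apply/matrixP => k l; rewrite !mxE -(orth k l) /dotv.
  by apply: eq_bigr => j _; rewrite !mxE.
have EE' := mulmx1C EE.
have Hu : u = E *m (E^T *m u) by rewrite mulmxA EE' mul1mx.
rewrite {1}Hu; apply/matrixP => j z; rewrite (ord1 z) !mxE summxE.
apply: eq_bigr => k _; rewrite !mxE mulrC; congr (_ * _).
rewrite /dotv; apply: eq_bigr => i _; rewrite !mxE mulrC.
by congr (u _ _ * e _ _ _); apply/val_inj.
Qed.

Lemma parseval {d} {e : 'I_d -> 'cV[R]_d} :
  (forall k l, dotv (e k) (e l) = (k == l)%:R) ->
  forall u w, dotv u w = \sum_(k < d) dotv u (e k) * dotv w (e k).
Proof.
move=> orth u w; rewrite {1}(expand orth u) dotv_suml.
by apply: eq_bigr => k _; rewrite dotvZl [dotv (e k) w]dotvC.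
Qed.

Lemma Vexpand {d} {e : 'I_d -> 'cV[R]_d} {V : 'M[R]_d} {lam : 'I_d -> R} :
  (forall k l, dotv (e k) (e l) = (k == l)%:R) ->
  (forall k, V *m e k = lam k *: e k) ->
  forall u, V *m u = \sum_(k < d) (lam k * dotv u (e k)) *: e k.
Proof.
move=> orth Ve u; rewrite {1}(expand orth u) mulmx_sumr.
by apply: eq_bigr => k _; rewrite -scalemxAr Ve scalerA mulrC.
Qed.

Lemma dotvV {d} {e : 'I_d -> 'cV[R]_d} {V : 'M[R]_d} {lam : 'I_d -> R} :
  (forall k l, dotv (e k) (e l) = (k == l)%:R) ->
  (forall k, V *m e k = lam k *: e k) ->
  forall u k, dotv (V *m u) (e k) = lam k * dotv u (e k).
Proof. by move=> orth Ve u k; rewrite (Vexpand orth Ve) dotv_coef. Qed.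

Lemma dotvVr {d} {e : 'I_d -> 'cV[R]_d} {V : 'M[R]_d} {lam : 'I_d -> R} :
  (forall k l, dotv (e k) (e l) = (k == l)%:R) ->
  (forall k, V *m e k = lam k *: e k) ->
  forall u w, dotv w (V *m u) = \sum_(k < d) lam k * dotv w (e k) * dotv u (e k).
Proof.
move=> orth Ve u w; rewrite (parseval orth); apply: eq_bigr => k _.
by rewrite (dotvV orth Ve) mulrCA mulrA.
Qed.


Lemma is_derive_entry m n (f : R -> 'M[R]_(m,n)) (t : R) (df : 'M[R]_(m,n)) i j :
  is_derive t 1 f df -> is_derive t 1 (fun s => f s i j) (df i j).
Proof.
move=> [Hd Hv].
have HQ : (fun h => h^-1 *: ((f \o shift t) (h *: 1) - f t)) @ 0^' --> df.
  by rewrite -Hv.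
have Hc := continuous_cvg _ (@coord_continuous R m n i j df) HQ.
have Hc' : (fun h => h^-1 *: (((fun s => f s i j) \o shift t) (h *: 1) - f t i j))
   @ 0^' --> df i j.
  have -> : (fun h => h^-1 *: (((fun s => f s i j) \o shift t) (h *: 1) - f t i j))
    = (fun M : 'M[R]_(m,n) => M i j) \o (fun h => h^-1 *: ((f \o shift t) (h *: 1) - f t)).
    by apply/funext => h; rewrite /= !mxE.
  exact: Hc.
by split; [exact: cvgP Hc' | exact: cvg_lim Hc'].
Qed.

Lemma is_derive_dotv d (f : R -> 'cV[R]_d) (t : R) df w :
  is_derive t 1 f df -> is_derive t 1 (fun s => dotv (f s) w) (dotv df w).
Proof.
move=> H.
have -> : (fun s => dotv (f s) w) = \sum_(j < d) (fun s => f s j 0 * w j 0).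
  by rewrite fct_sumE; apply/funext => s.
rewrite /dotv; apply: is_derive_sum => j.
have H2 := is_deriveM (@is_derive_entry d 1 f t df j 0 H) (is_derive_cst (w j 0) t 1).
refine (is_derive_eq H2 _).
by rewrite /cst scaler0 add0r /GRing.scale /= mulrC.
Qed.


Lemma cvg_sumR (T : Type) (F : set_system T) (FF : Filter F) n (f : 'I_n -> T -> R)
  (l : 'I_n -> R) : (forall j, f j t @[t --> F] --> l j) ->
  (\sum_(j < n) f j t) @[t --> F] --> \sum_(j < n) l j.
Proof.
move=> H.
have -> : (fun t => \sum_(j < n) f j t) = \sum_(j < n) f j by rewrite fct_sumE.
elim/big_ind2: _ => //; first exact: cvg_cst.
by move=> g1 l1 g2 l2 H1 H2; apply: cvgD.
Qed.

Lemma cvg_dotv (T : Type) (F : set_system T) (FF : Filter F) d (f : T -> 'cV[R]_d)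
  (a w : 'cV[R]_d) : f t @[t --> F] --> a -> dotv (f t) w @[t --> F] --> dotv a w.
Proof.
move=> H; rewrite /dotv; apply: cvg_sumR => j.
have h := continuous_cvg _ (@coord_continuous R d 1 j 0 a) H.
by apply: cvgMl; exact: h.
Qed.

Lemma is_derive_affine (a b t : R) : is_derive t 1 (fun u => a * u + b) a.
Proof.
refine (is_derive_eq (is_deriveD (is_deriveZ a (is_derive_id t 1)) (is_derive_cst b t 1)) _).
by rewrite addr0 /GRing.scale /= mulr1.
Qed.

Lemma is_derive_expl (c t : R) : is_derive t 1 (fun u => expR (c * u)) (expR (c * t) * c).
Proof.
have H := @is_derive1_comp R expR (fun u => c * u + 0) t _ _ (is_derive_expR (c * t + 0)) (is_derive_affine c 0 t).
have -> : (fun u => expR (c * u)) = expR \o (fun u => c * u + 0) by apply/funext => u; rewrite /= addr0.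
by rewrite addr0 in H.
Qed.


Definition wgt {d n} (beta : R) (V : 'M[R]_d) (X : 'I_n -> 'cV[R]_d) i j :=
  expR (beta * dotv (X i) (V *m X j)) / Zpart beta V X i.

Lemma Zpart_gt0 d n (beta : R) (V : 'M[R]_d) (X : 'I_n -> 'cV[R]_d) i :
  0 < Zpart beta V X i.
Proof.
rewrite /Zpart (bigD1 i) //=; apply: ltr_pwDl; first exact: expR_gt0.
by apply: sumr_ge0 => j _; exact: expR_ge0.
Qed.

Lemma wgt_gt0 d n (beta : R) (V : 'M[R]_d) (X : 'I_n -> 'cV[R]_d) i j :
  0 < wgt beta V X i j.
Proof. by rewrite /wgt divr_gt0 ?expR_gt0 ?Zpart_gt0. Qed.

Lemma wgt_sum1 d n (beta : R) (V : 'M[R]_d) (X : 'I_n -> 'cV[R]_d) i :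
  \sum_j wgt beta V X i j = 1.
Proof. by rewrite /wgt -mulr_suml divff // gt_eqF // Zpart_gt0. Qed.

Lemma fieldE d n (beta : R) (V : 'M[R]_d) (e : 'I_d -> 'cV[R]_d) (lam : 'I_d -> R)
  (X : 'I_n -> 'cV[R]_d) i k :
  (forall k l, dotv (e k) (e l) = (k == l)%:R) ->
  (forall k, V *m e k = lam k *: e k) ->
  dotv (attn_field beta V X i) (e k) =
  lam k * \sum_j wgt beta V X i j * dotv (X j) (e k)
  - (\sum_j wgt beta V X i j * dotv (X i) (V *m X j)) * dotv (X i) (e k).
Proof.
move=> orth Ve.
rewrite /attn_field /Pperp dotvBl dotvZl [dotv (X i) _]dotvC !dotvZl !dotv_suml.
congr (_ - _ * _).
  rewrite mulr_sumr mulr_sumr; apply: eq_bigr => j _.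
  by rewrite dotvZl (dotvV orth Ve) /wgt; field; apply: lt0r_neq0; exact: Zpart_gt0.
rewrite mulr_sumr; apply: eq_bigr => j _.
rewrite dotvZl (@dotvC _ (V *m X j) (X i)) /wgt. field; apply: lt0r_neq0; exact: Zpart_gt0.
Qed.

End LinAlg.
Lemma key1 (R : realType) (d : nat) (lam u w : 'I_d.+1 -> R) (b : R) :
  (forall k, k != ord0 -> `|lam k| < lam ord0) ->
  \sum_k u k ^+ 2 = 1 -> \sum_k w k ^+ 2 = 1 -> u ord0 = b -> 0 < b -> b <= w ord0 ->
  0 <= lam ord0 * w ord0 - b * \sum_k lam k * u k * w k.
Proof.
move=> lamgt Hu Hw ub b0 bw.
rewrite (bigD1 ord0) //= in Hu; rewrite (bigD1 ord0) //= in Hw; rewrite (bigD1 ord0) //=.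
rewrite ub in Hu *.
set P := \sum_(k | k != ord0) u k ^+ 2 in Hu.
set Q := \sum_(k | k != ord0) w k ^+ 2 in Hw.
set S := \sum_(k | k != ord0) lam k * u k * w k.
have P0 : 0 <= P by apply: sumr_ge0 => k _; exact: sqr_ge0.
have Q0 : 0 <= Q by apply: sumr_ge0 => k _; exact: sqr_ge0.
case: (leP 0 (lam ord0)) => hl.
  have HS : S <= (lam ord0) * (P + Q) / 2.
    apply: (@le_trans _ _ (\sum_(k | k != ord0) (lam ord0) * (u k ^+ 2 + w k ^+ 2) / 2)).
      apply: ler_sum => k hk; have := lamgt k hk; rewrite ltr_norml => /andP[h1 h2].
      have e1 : 0 <= ((lam ord0) + lam k) * (u k - w k) ^+ 2.
        by apply: mulr_ge0; [lra | exact: sqr_ge0].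
      have e2 : 0 <= ((lam ord0) - lam k) * (u k + w k) ^+ 2.
        by apply: mulr_ge0; [lra | exact: sqr_ge0].
      have E : (lam ord0) * (u k ^+ 2 + w k ^+ 2) / 2 - lam k * u k * w k = (((lam ord0) + lam k) * (u k - w k) ^+ 2 + ((lam ord0) - lam k) * (u k + w k) ^+ 2) / 4 by field.
      by rewrite -subr_ge0 E; apply: divr_ge0 => //; apply: addr_ge0.
    by rewrite -mulr_suml -mulr_sumr big_split.
  have HP : P = 1 - b ^+ 2 by lra.
  have HQ : Q = 1 - (w ord0) ^+ 2 by lra.
  have h2 : Q <= P by rewrite HP HQ; nra.
  have h1 : 0 <= ((w ord0) - b) * P by apply: mulr_ge0; lra.
  have h3 : 0 <= (lam ord0) * (((w ord0) - b) * P + b * (P - Q) / 2).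
    by apply: mulr_ge0 => //; nra.
  have h4 : b * S <= b * ((lam ord0) * (P + Q) / 2) by rewrite ler_pM2l.
  rewrite HP in h3 h4; nra.
have none : forall k : 'I_d.+1, k != ord0 -> False.
  by move=> k hk; have := lamgt k hk; have := normr_ge0 (lam k); lra.
have P00 : P = 0 by rewrite /P big1 // => k /none.
have S0 : S = 0 by rewrite /S big1 // => k /none.
rewrite S0; rewrite P00 addr0 in Hu.
have -> : lam ord0 * w ord0 - b * (lam ord0 * b * w ord0 + 0) = lam ord0 * w ord0 * (1 - b ^+ 2) by ring.
by rewrite Hu subrr mulr0.
Qed.

Lemma key2 (R : realType) n (A c1 ck : 'I_n -> R) (i : 'I_n) (s B dl lk l1 : R) :
  (forall j, 0 <= A j) -> \sum_j A j = 1 -> (forall j, dl <= c1 j) -> 0 < dl ->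
  c1 i <= 1 -> `|s| = 1 -> 0 < B ->
  (forall j, `|ck j| <= B * c1 j) -> s * ck i = B * c1 i -> `|lk| < l1 ->
  s * ((lk * c1 i * \sum_j A j * ck j - l1 * ck i * \sum_j A j * c1 j) / c1 i ^+ 2)
    <= - (dl * (l1 - `|lk|)) * B.
Proof.
move=> A0 A1 c1d dl0 c1le s1 B0 ckB touch lkl.
set M := \sum_j A j * c1 j.
set Sg := \sum_j A j * ck j.
have Mge : dl <= M.
  have -> : dl = \sum_j A j * dl by rewrite -mulr_suml A1 mul1r.
  by apply: ler_sum => j _; apply: ler_wpM2l.
have T1 : `|Sg| <= B * M.
  apply: le_trans (ler_norm_sum _ _ _) _; rewrite /M mulr_sumr.
  apply: ler_sum => j _; rewrite normrM ger0_norm // mulrCA.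
  by apply: ler_wpM2l.
have c1pos : 0 < c1 i by apply: lt_le_trans (c1d i).
have E : s * ((lk * c1 i * Sg - l1 * ck i * M) / c1 i ^+ 2)
   = (lk * (s * Sg) - l1 * (s * ck i) * M / c1 i) / c1 i.
  by field; rewrite gt_eqF.
rewrite E touch ler_pdivrMr //.
have h1 : lk * (s * Sg) <= `|lk| * (B * M).
  apply: le_trans (ler_norm _) _; rewrite normrM normrM s1 mul1r.
  by apply: ler_wpM2l.
have h2 : dl * c1 i <= M by nra.
have h3 : 0 <= (l1 - `|lk|) * B * (M - dl * c1 i).
  by apply: mulr_ge0; [apply: mulr_ge0; lra | lra].
have -> : l1 * (B * c1 i) * M / c1 i = l1 * B * M by field; rewrite gt_eqF.
nra.
Qed.

Theorem theorem6p1 (R : realType) (d n : nat) (beta : R)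
  (V : 'M[R]_d.+1) (e : 'I_d.+1 -> 'cV[R]_d.+1) (lam : 'I_d.+1 -> R)
  (x : 'I_n -> R -> 'cV[R]_d.+1) (delta : R) :
  0 < beta ->
  V^T = V ->
  (forall k l, dotv (e k) (e l) = (k == l)%:R) ->
  (forall k, V *m e k = lam k *: e k) ->
  (forall k, k != ord0 -> `|lam k| < lam ord0) ->
  (forall i (t : R), 0 <= t -> dotv (x i t) (x i t) = 1) ->
  (forall i, {within `[0, +oo[, continuous (x i)}) ->
  (forall i (t : R), 0 < t ->
     is_derive t 1 (x i) (attn_field beta V (fun j => x j t) i)) ->
  0 < delta ->
  (forall i, delta <= dotv (x i 0) (e ord0)) ->
  (* (1) forward invariance of the cone C_delta *)
  (forall s t : R, 0 <= s -> s <= t ->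
     (forall i, delta <= dotv (x i s) (e ord0)) ->
     (forall i, delta <= dotv (x i t) (e ord0)))
  /\
  (* (2) exponential decay of R_k *)
  (forall k, k != ord0 -> forall t : R, 0 <= t ->
     \big[Num.max/0]_(i < n) `|dotv (x i t) (e k) / dotv (x i t) (e ord0)|
     <= \big[Num.max/0]_(i < n) `|dotv (x i 0) (e k) / dotv (x i 0) (e ord0)|
        * expR (- (delta * (lam ord0 - `|lam k|) * t)))
  /\
  (* (3) convergence to e_1 *)
  (forall i, x i t @[t --> +oo%R] --> e ord0).
Proof.
move=> hb Vsym orth Ve lamgt unit xc xd dpos init.
pose cc i k u := dotv (x i u) (e k).
pose D i k u := dotv (attn_field beta V (fun j => x j u) i) (e k).
pose W u i j := @wgt R _ _ beta V (fun j => x j u) i j.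
pose sf u i := \sum_j W u i j * dotv (x i u) (V *m x j u).
have ccd : forall i k (u : R), 0 < u -> is_derive u 1 (cc i k) (D i k u).
  by move=> i k u u0; exact: is_derive_dotv (xd i u u0).
have DE : forall i k (u : R), D i k u = lam k * \sum_j W u i j * cc j k u - sf u i * cc i k u.
  by move=> i k u; exact: fieldE.
have sq1 : forall i (u : R), 0 <= u -> \sum_k cc i k u ^+ 2 = 1.
  move=> i u u0; rewrite -(unit i u u0) (parseval orth).
  by apply: eq_bigr => k _; rewrite expr2.
have c0le1 : forall i (u : R), 0 <= u -> cc i ord0 u <= 1.
  move=> i u u0; have := sq1 i u u0; rewrite (bigD1 ord0) //= => H.
  have : 0 <= \sum_(k | k != ord0) cc i k u ^+ 2.
    by apply: sumr_ge0 => k _; exact: sqr_ge0.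
  nra.
have ccr : forall i k (a : R), 0 <= a -> cc i k u @[u --> a^'+] --> cc i k a.
  move=> i k a; rewrite le_eqVlt => /orP[/eqP <-| a0].
    have [_ H] := (continuous_within_itvcyP 0 (x i)).1 (xc i).
    exact: cvg_dotv H.
  by apply: cvg_at_right_filter; exact: deriv_cont (ccd i k a a0).
have inner : forall i j (u : R), dotv (x i u) (V *m x j u) = \sum_k lam k * cc i k u * cc j k u.
  by move=> i j u; exact: (dotvVr orth Ve).
have Wpos : forall u i j, 0 < W u i j by move=> *; exact: wgt_gt0.
have W1 : forall u i, \sum_j W u i j = 1 by move=> *; exact: wgt_sum1.
have D0ge : forall i (u : R), 0 <= u -> 0 < cc i ord0 u ->
    (forall j, cc i ord0 u <= cc j ord0 u) -> 0 <= D i ord0 u.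
  move=> i u u0 ci cij.
  have -> : D i ord0 u = \sum_j W u i j * (lam ord0 * cc j ord0 u
            - cc i ord0 u * \sum_k lam k * cc i k u * cc j k u).
    rewrite DE /sf mulr_sumr mulr_suml -sumrB; apply: eq_bigr => j _.
    by rewrite -inner; ring.
  apply: sumr_ge0 => j _; apply: mulr_ge0; first exact: ltW.
  exact: key1 (sq1 i u u0) (sq1 j u u0) erefl ci (cij j).
have part1 : forall s t : R, 0 <= s -> s <= t ->
     (forall i, delta <= cc i ord0 s) -> (forall i, delta <= cc i ord0 t).
  move=> s t s0 st hs i; rewrite leNgt; apply/negP => ht.
  pose eps := Num.min (delta / 2) ((delta - cc i ord0 t) / 2).
  have eps0 : 0 < eps by rewrite lt_min; apply/andP; split; lra.
  have eps1 : eps <= delta / 2 by rewrite ge_min lexx.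
  have eps2 : eps <= (delta - cc i ord0 t) / 2 by rewrite ge_min lexx orbT.
  pose kap := eps / (2 * (1 + t - s)).
  have kap0 : 0 < kap by rewrite /kap divr_gt0 //; lra.
  have kapt : kap * (t - s) <= eps / 2.
    have -> : kap * (t - s) = eps / 2 * ((t - s) / (1 + t - s)).
      by rewrite /kap; field; lra.
    rewrite -[leRHS]mulr1; apply: ler_wpM2l; first lra.
    by rewrite ler_pdivrMr; lra.
  pose b (u : R) := (- kap) * u + (delta - eps / 2 + kap * s).
  have bd : forall u : R, is_derive u 1 b (- kap) by move=> u; exact: is_derive_affine.
  have : 0 < cc i ord0 t - b t.
  apply: (@barrier R 'I_n (fun j u => cc j ord0 u - b u) (fun j u => D j ord0 u - - kap) s t
     _ _ _ _ i t st (lexx t)).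
  - move=> j; apply: cvgB; first exact: ccr.
    by apply: cvg_at_right_filter; exact: deriv_cont (bd s).
  - move=> j u su ut; refine (is_derive_eq (is_deriveB (ccd j ord0 u _) (bd u)) _) => //.
    exact: le_lt_trans s0 su.
  - by move=> j; have := hs j; rewrite /b; lra.
  - move=> j u su ut hall hj.
    have u0 : 0 <= u by apply: ltW; exact: le_lt_trans s0 su.
    have bpos : 0 < b u.
      have : kap * (u - s) <= kap * (t - s) by apply: ler_wpM2l; lra.
      rewrite /b; lra.
    have cj : 0 < cc j ord0 u by lra.
    have := D0ge j u u0 cj; rewrite /=.
    suff : forall l, cc j ord0 u <= cc l ord0 u by move=> H /(_ H); lra.
    by move=> l; have := hall l; lra.
  - have := kapt; rewrite /b; lra.
have c0pos : forall j (u : R), 0 <= u -> delta <= cc j ord0 u.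
  by move=> j u u0; apply: (part1 0 u (lexx 0) u0 init).
pose sg (b : bool) : R := if b then 1 else -1.
have sg1 : forall b, `|sg b| = 1 by case; rewrite /sg ?normrN normr1.
have part2 : forall k, k != ord0 -> forall t : R, 0 <= t -> forall i,
    `|cc i k t / cc i ord0 t| <=
    \big[Num.max/0]_(i < n) `|cc i k 0 / cc i ord0 0| *
       expR (- (delta * (lam ord0 - `|lam k|) * t)).
  move=> k k0 t t0 i.
  set R0 := \big[Num.max/0]_(i < n) `|cc i k 0 / cc i ord0 0|.
  have R00 : 0 <= R0.
    rewrite /R0; elim/big_ind: _ => //= a1 a2 h1 h2.
    by rewrite le_max h1.
  set mu := delta * (lam ord0 - `|lam k|).
  have mu0 : 0 < mu.
    by rewrite /mu mulr_gt0 // subr_gt0 lamgt.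
  apply/ler_addgt0Pr => eps eps0.
  pose B (u : R) := R0 * expR ((- mu) * u) + eps.
  pose Bd (u : R) := R0 * (expR ((- mu) * u) * (- mu)).
  have Bder : forall u : R, is_derive u 1 B (Bd u).
    move=> u.
    refine (is_derive_eq (is_deriveD (is_deriveZ R0 (is_derive_expl (- mu) u))
       (is_derive_cst eps u 1)) _).
    by rewrite addr0 /Bd /GRing.scale.
  pose r j (u : R) := cc j k u / cc j ord0 u.
  pose rd j (u : R) := cc j k u *: (- (cc j ord0 u) ^- 2 *: D j ord0 u)
       + (cc j ord0 u)^-1 *: D j k u.
  have rder : forall j (u : R), 0 < u -> is_derive u 1 (r j) (rd j u).
    move=> j u u0.
    have cne : cc j ord0 u != 0 by apply: lt0r_neq0; apply: lt_le_trans (c0pos j u (ltW u0)).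
    exact: (is_deriveM (ccd j k u u0) (is_deriveV cne (ccd j ord0 u u0))).
  have : forall b, 0 < B t - sg b * r i t.
    move=> bb.
    apply: (@barrier R ('I_n * bool)%type (fun jb u => B u - sg jb.2 * r jb.1 u)
       (fun jb u => Bd u - sg jb.2 * rd jb.1 u) 0 t _ _ _ _ (i, bb) t t0 (lexx t)).
    - move=> [j b'] /=; apply: cvgB.
        by apply: cvg_at_right_filter; exact: deriv_cont (Bder 0).
      apply: cvgMr; apply: cvgM; first exact: ccr.
      apply: cvgV; last exact: ccr.
      by apply: lt0r_neq0; apply: lt_le_trans (c0pos j 0 (lexx 0)).
    - move=> [j b'] u u0 ut /=.
      exact: (is_deriveB (Bder u) (is_deriveZ (sg b') (rder j u u0))).
    - move=> [j b'] /=; rewrite /B mulr0 expR0 mulr1.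
      have : sg b' * r j 0 <= R0.
        apply: le_trans (ler_norm _) _; rewrite normrM sg1 mul1r.
        exact: (le_bigmax 0 (fun i => `|cc i k 0 / cc i ord0 0|) j).
      lra.
    - move=> [i' b'] u u0 ut hall /= hz.
      have u0' : 0 <= u by apply: ltW.
      have Bpos : 0 < B u.
        rewrite /B; have := expR_gt0 ((- mu) * u); have := mulr_ge0 R00 (expR_ge0 ((- mu) * u)).
        lra.
      have hr : forall j, `|cc j k u| <= B u * cc j ord0 u.
        move=> j; have h1 := hall (j, true); have h2 := hall (j, false).
        rewrite /= /sg in h1 h2.
        have c0p : 0 < cc j ord0 u by apply: lt_le_trans (c0pos j u u0').
        have : `|r j u| <= B u by rewrite ler_norml; apply/andP; split; lra.
        by rewrite /r normrM normfV (gtr0_norm c0p) ler_pdivrMr.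
      have c0p : 0 < cc i' ord0 u by apply: lt_le_trans (c0pos i' u u0').
      have touch : sg b' * cc i' k u = B u * cc i' ord0 u.
        have E : sg b' * cc i' k u = (sg b' * r i' u) * cc i' ord0 u.
          by rewrite /r; field; apply: lt0r_neq0.
        by rewrite E; congr (_ * _); lra.
      have K := @key2 R n (W u i') (fun j => cc j ord0 u) (fun j => cc j k u) i' (sg b') (B u) delta (lam k) (lam ord0) (fun j => ltW (Wpos u i' j)) (W1 u i') (fun j => c0pos j u u0') dpos
         (c0le1 i' u u0') (sg1 b') Bpos hr touch (lamgt k k0).
      have Erd : rd i' u = (lam k * cc i' ord0 u * \sum_j W u i' j * cc j k u
           - lam ord0 * cc i' k u * \sum_j W u i' j * cc j ord0 u) / cc i' ord0 u ^+ 2.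
        rewrite /rd !DE /GRing.scale /=; field; exact: lt0r_neq0.
      rewrite Erd; rewrite -/mu in K.
      have := mulr_gt0 mu0 eps0.
      rewrite /Bd /B in K *.
      nra.
  move=> H; have h1 := H true; have h2 := H false; rewrite /sg /B in h1 h2.
  rewrite !mulNr in h1 h2; rewrite -/(r i t); apply/ltW; rewrite ltr_norml; apply/andP; split; lra.
have part3 : forall i, x i t @[t --> +oo%R] --> e ord0.
  move=> i; apply/cvgrPdist_le => eps eps0.
  pose eta := eps ^+ 2 / (2 * (d.+1)%:R).
  have eta0 : 0 < eta by rewrite /eta divr_gt0 ?exprn_gt0 // mulr_gt0 // ltr0n.
  pose rho := Num.min 1 eta.
  have rho0 : 0 < rho by rewrite lt_min ltr01 eta0.
  have rho1 : rho <= 1 by rewrite ge_min lexx.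
  have rhoe : rho <= eta by rewrite ge_min lexx orbT.
  have H1 : \forall t \near +oo%R, forall k : 'I_d.+1,
      (k != ord0 -> (cc i k t / cc i ord0 t) ^+ 2 <= eta).
    refine (@filter_forall R 'I_d.+1 (fun k t => k != ord0 -> (cc i k t / cc i ord0 t) ^+ 2 <= eta) _ _ _) => k.
    case: (eqVneq k ord0) => [->|k0].
      by apply: filterE => t /=.
    set Rk := \big[Num.max/0]_(i < n) `|cc i k 0 / cc i ord0 0|.
    have Rk0 : 0 <= Rk by exact: bigmax_ge_id.
    set mu := delta * (lam ord0 - `|lam k|).
    have mu0 : 0 < mu by rewrite /mu mulr_gt0 // subr_gt0 lamgt.
    apply: filterS (nbhs_pinfty_gt (num_real (Num.max 0 (Rk / (rho * mu))))).
    move=> t; rewrite gt_max => /andP[t0 tM] _.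
    have := part2 k k0 t (ltW t0) i; rewrite -/Rk -/mu => hr.
    have hE : Rk * expR (- (mu * t)) <= rho.
      rewrite expRN.
      rewrite ler_pdivrMr ?expR_gt0 //.
      have := expR_ge1Dx (mu * t).
      move: tM; rewrite ltr_pdivrMr; last exact: mulr_gt0. move=> tM.
      nra.
    have ha : `|cc i k t / cc i ord0 t| <= rho by apply: le_trans hr hE.
    rewrite -(real_normK (num_real (cc i k t / cc i ord0 t))).
    have := normr_ge0 (cc i k t / cc i ord0 t).
    nra.
  have H0 : \forall t \near +oo%R, (0:R) < t.
    by apply: filterS (nbhs_pinfty_gt (num_real (0:R))) => t.
  apply: (filterS2 _ _ H0 H1) => t t0 hk.
  have t0' : 0 <= t by apply: ltW.
  have c0d := c0pos i t t0'.
  have c01 := c0le1 i t t0'.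
  have c0n : cc i ord0 t != 0 by apply: lt0r_neq0; lra.
  have hsum : 1 - cc i ord0 t <= eps ^+ 2 / 2.
    have := sq1 i t t0'; rewrite (bigD1 ord0) //= => hs.
    have hb3 : \sum_(k : 'I_d.+1 | k != ord0) cc i k t ^+ 2 <= \sum_(k : 'I_d.+1 | k != ord0) eta.
      apply: ler_sum => k k0; have := hk k k0.
      have E : cc i k t ^+ 2 = (cc i k t / cc i ord0 t) ^+ 2 * cc i ord0 t ^+ 2.
        by field.
      move=> hr; rewrite E; apply: le_trans hr; rewrite -[X in _ <= X]mulr1.
      by apply: ler_wpM2l; [exact: sqr_ge0 | nra].
    have hb2 : \sum_(k : 'I_d.+1 | k != ord0) eta <= eta * (d.+1)%:R.
      apply: (@le_trans _ _ (\sum_(k < d.+1) eta)).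
        by rewrite [X in _ <= X](bigD1 ord0) //=; lra.
      by rewrite sumr_const card_ord mulr_natr.
    have E2 : eta * (d.+1)%:R = eps ^+ 2 / 2.
      rewrite /eta; field; apply: lt0r_neq0.
      by have hd : (0:R) <= d%:R := ler0n _ _; lra.
    have hc : cc i ord0 t ^+ 2 <= cc i ord0 t.
      by rewrite expr2 -[X in _ <= X]mulr1; apply: ler_wpM2l; lra.
    lra.
  have -> : `|e ord0 - x i t| = mx_norm (e ord0 - x i t) by [].
  rewrite mx_normrE; apply: bigmax_le => [|[j z] _] /=; first exact: ltW.
  set v := e ord0 - x i t.
  have vv : dotv v v = 2 - 2 * cc i ord0 t.
    rewrite /v dotvBl (@dotvC _ _ (e ord0)) (@dotvC _ _ (x i t)) !dotvBl orth eqxx unit //.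
    rewrite (@dotvC _ _ (e ord0) (x i t)) /cc /=; lra.
  have entry : v j z ^+ 2 <= dotv v v.
    rewrite /dotv (bigD1 j) //= (ord1 z) expr2 lerDl.
    by apply: sumr_ge0 => l _; rewrite -expr2; exact: sqr_ge0.
  rewrite ler_norml; apply/andP; split; nra.
split; first exact: part1.
split; last exact: part3.
move=> k k0 t t0; apply: bigmax_le => [|i _].
  apply: mulr_ge0; [exact: bigmax_ge_id | exact: expR_ge0].
exact: part2.
Qed.
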